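(* For every integer $k\ge 1$, $$\delta(k)=\tfrac12 k+O(\log k)\qquad (k\to\infty),$$ where $\delta(k)$ is as defined in the context. That is, there is an absolute constant $C$ such that $|\delta(k)-\tfrac12 k|\le C\log(k+1)$ for all $k\ge1$.
   Context: A function $f:\mathbb{N}\to\{+1,-1\}$ is completely multiplicative if $f(ab)=f(a)f(b)$ for all $a,b\in\mathbb{N}$. For an integer $q>1$ and a real-valued (i.e. $\{0,\pm1\}$-valued) Dirichlet character $\chi_q$ modulo $q$ (principal or not, primitive or not), a modified character $\tilde\chi_q$ is the completely multiplicative function $\mathbb{N}\to\{+1,-1\}$ defined on primes by $\tilde\chi_q(p)=\chi_q(p)$ if $p\nmid q$, and $\tilde\chi_q(p)=\eta(p)$ if $p\mid q$, where $\eta(p)\in\{+1,-1\}$ is an arbitrary choice of sign for each prime $p\mid q$. For such $\tilde\chi_q$ and $k\ge1$ set $$\delta(\tilde\chi_q;k)=\min_{n\in\mathbb{N}\cup\{0\}}\#\{1\le m\le k:\ \tilde\chi_q(n+m)=-1\},$$ the least number of $-1$ values of $\tilde\chi_q$ in a block of $k$ consecutive positive integers (this is the number of primes at which $\tilde\chi_q$ must be modified so that it takes the value $+1$ at $k$ consecutive integers). Define $\delta(k)=\sup\delta(\tilde\chi_q;k)$, the supremum over all integers $q>1$, all real Dirichlet characters $\chi_q$ mod $q$ and all sign choices $\eta$. *)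

(* Defs.v *)
From mathcomp Require Import all_boot all_algebra.
From mathcomp Require Import boolp.
Set Implicit Arguments. Unset Strict Implicit. Unset Printing Implicit Defensive.
Import GRing.Theory Num.Theory.
Local Open Scope ring_scope.

Definition real_dirichlet_char (q : nat) (chi : nat -> int) : Prop :=
  [/\ forall n, chi n \in [:: 0; 1; -1],
      forall n, chi (n + q)%N = chi n,
      forall m n, chi (m * n)%N = chi m * chi n
    & forall n, (chi n == 0) = ~~ coprime n q].

(* A completely
   multiplicative function is determined by its values at primes, so this is
   exactly the set of all modified characters tilde-chi_q. The value at 0 is
   irrelevant and unconstrained. *)
Definition modified_char (q : nat) (chi : nat -> int) (f : nat -> int) : Prop :=
  [/\ forall n, (0 < n)%N -> f n = 1 \/ f n = -1,
      forall a b, (0 < a)%N -> (0 < b)%N -> f (a * b)%N = f a * f b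
    & forall p, prime p -> ~~ (p %| q)%N -> f p = chi p].

Definition neg_count (f : nat -> int) (k n : nat) : nat :=
  (\sum_(1 <= m < k.+1) nat_of_bool (f (n + m)%N == (-1)%R))%N.

Lemma neg_count_attained (f : nat -> int) (k : nat) :
  exists d, `[< exists n, neg_count f k n = d >].
Proof. by exists (neg_count f k 0); apply/asboolP; exists 0%N. Qed.

Definition delta_char (f : nat -> int) (k : nat) : nat :=
  ex_minn (neg_count_attained f k).

(* delta(k) = sup over q > 1, real characters chi mod q, and sign choices
   (i.e. modified characters f). All such values lie in [0,k], so the sup is
   the max over d <= k of attained values. *)
Definition delta (k : nat) : nat :=
  \max_(d < k.+1 | `[< exists (q : nat) (chi f : nat -> int),
        [/\ (1 < q)%N, real_dirichlet_char q chi, modified_char q chi f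
          & delta_char f k = d] >]) d.

(* Main.v *)
Require Import Defs.
From mathcomp Require Import all_boot all_algebra.
From mathcomp Require Import boolp zify.
Set Implicit Arguments. Unset Strict Implicit. Unset Printing Implicit Defensive.
Import GRing.Theory Num.Theory.

Lemma blocks (R : Type) (idx : R) (op : Monoid.law idx) a b (F : nat -> R) :
  \big[op/idx]_(n < b * a) F n = \big[op/idx]_(i < b) \big[op/idx]_(m < a) F (i * a + m).
Proof.
elim: b => [|b IH]; first by rewrite mul0n !big_ord0.
rewrite big_ord_recr /= -IH mulSn addnC -!(big_mkord xpredT).
rewrite (@big_cat_nat _ _ _ (b*a)) /= ?leq_addr //.
congr (op _ _).
rewrite -{1}(add0n (b*a)) big_addn addnC addnK.
rewrite big_mkord; by apply: eq_bigr => i _; rewrite addnC.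
Qed.

Lemma negcountE f k n : neg_count f k n = \sum_(m < k) (f (n + m.+1)%N == (-1)%R).
Proof. by rewrite /neg_count big_add1 /= big_mkord. Qed.

Local Open Scope ring_scope.

Lemma f1 q chi f : modified_char q chi f -> f 1%N = 1.
Proof.
case=> Hv Hm _; have := Hm 1%N 1%N isT isT; rewrite muln1.
by case: (Hv 1%N isT) => ->.
Qed.

Lemma chi1 q chi : (1 < q)%N -> real_dirichlet_char q chi -> chi 1%N = 1.
Proof.
move=> q1 [Hv _ Hm H0]; have := Hm 1%N 1%N; rewrite muln1.
have : chi 1%N != 0 by rewrite H0 coprime1n.
move: (Hv 1%N); rewrite !inE => /or3P [] /eqP -> //.
Qed.

Lemma chi_per q chi n t : real_dirichlet_char q chi -> chi (n + q * t)%N = chi n.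
Proof.
case=> _ Hp _ _; elim: t => [|t IH]; first by rewrite muln0 addn0.
by rewrite mulnS addnCA addnC Hp.
Qed.

Lemma chi_mod q chi n : real_dirichlet_char q chi -> chi n = chi (n %% q)%N.
Proof. by move=> H; rewrite {1}(divn_eq n q) mulnC addnC (chi_per _ _ H). Qed.

Lemma fchi q chi f n : (1 < q)%N -> real_dirichlet_char q chi -> modified_char q chi f ->
  (0 < n)%N -> coprime n q -> f n = chi n.
Proof.
move=> q1 Hc Hf; elim: n {-2}n (leqnn n) => [|N IH] n.
  by rewrite leqn0 => /eqP ->.
move=> HnN n0 cnq.
have [n1|n1] := leqP n 1%N.
  have -> : n = 1%N by apply/eqP; rewrite eqn_leq n1 n0.
  by rewrite (f1 Hf) (chi1 q1 Hc).
have pp := pdiv_prime n1; have pd := pdiv_dvd n.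
have Hn : n = (pdiv n * (n %/ pdiv n))%N by rewrite mulnC divnK.
have pg : (0 < pdiv n)%N by apply: prime_gt0.
have n'0 : (0 < n %/ pdiv n)%N by rewrite divn_gt0 // dvdn_leq.
have cpq : coprime (pdiv n) q by apply: coprime_dvdl cnq.
have cn'q : coprime (n %/ pdiv n) q by apply: coprime_dvdl cnq; apply: dvdn_div.
case: (Hf) => _ Hm Hp; case: (Hc) => _ _ Hcm _.
rewrite Hn Hm // Hcm Hp //; last by rewrite -prime_coprime.
congr (_ * _); apply: IH => //.
rewrite -ltnS; apply: leq_trans HnN; rewrite ltn_Pdiv //; exact: prime_gt1.
Qed.

Local Close Scope ring_scope.
Lemma coprimeMD c q s : coprime (c * q + s) q = coprime s q.
Proof. by rewrite /coprime gcdnC gcdnMDl gcdnC. Qed.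

Lemma lemG n q a : (0 < n)%N -> (0 < q)%N ->
  ~~ coprime (n %/ gcdn n (q ^ a)) q -> exists p, [/\ prime p, (p %| q)%N & (p ^ a %| n)%N].
Proof.
move=> n0 q0 nc.
set g := gcdn n (q ^ a).
have g0 : (0 < g)%N by rewrite gcdn_gt0 n0.
set m := n %/ g.
have Hn : n = (g * m)%N by rewrite mulnC divnK // dvdn_gcdl.
have m0 : (0 < m)%N by move: n0; rewrite Hn muln_gt0 => /andP[].
have gt1 : (1 < gcdn m q)%N.
  by rewrite ltn_neqAle eq_sym nc gcdn_gt0 m0.
have pp := pdiv_prime gt1.
have pm : (pdiv (gcdn m q) %| m)%N := dvdn_trans (pdiv_dvd _) (dvdn_gcdl _ _).
have pq : (pdiv (gcdn m q) %| q)%N := dvdn_trans (pdiv_dvd _) (dvdn_gcdr _ _).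
set p := pdiv (gcdn m q) in pp pm pq.
exists p; split => //.
set r := q ^ a %/ g.
have Hq : (q ^ a = g * r)%N by rewrite mulnC divnK // dvdn_gcdr.
case: (boolP (p %| r)%N) => pr.
  have : (g * p %| g)%N.
    rewrite dvdn_gcd; apply/andP; split.
      by rewrite Hn dvdn_pmul2l.
    by rewrite Hq dvdn_pmul2l.
  rewrite -{2}(muln1 g) dvdn_pmul2l // dvdn1 => /eqP p1.
  by move: pp; rewrite p1.
have cpr : coprime (p ^ a) r.
  by apply: coprimeXl; rewrite prime_coprime.
have : (p ^ a %| g * r)%N by rewrite -Hq dvdn_exp2r.
rewrite Gauss_dvdl // => H; apply: dvdn_trans H _; exact: dvdn_gcdl.
Qed.

Lemma anchor q chi f K t s : (1 < q)%N -> real_dirichlet_char q chi -> modified_char q chi f ->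
  (0 < s <= K)%N -> f (q ^ K.+1 * t + s)%N = f s.
Proof.
move=> q1 Hc Hf /andP[s0 sK].
have q0 : (0 < q)%N by apply: ltnW.
set g := gcdn s (q ^ K).
have g0 : (0 < g)%N by rewrite gcdn_gt0 s0.
set s2 := s %/ g.
have Hs : s = (g * s2)%N by rewrite mulnC divnK // dvdn_gcdl.
have s20 : (0 < s2)%N by move: s0; rewrite Hs muln_gt0 => /andP[].
have cs2 : coprime s2 q.
  apply: contraT => /(lemG s0 q0) [p [pp _ pK]].
  have : (p ^ K <= s)%N by apply: dvdn_leq.
  have : (K < p ^ K)%N by apply: ltn_expl; apply: prime_gt1.
  move=> h1 h2; have := leq_ltn_trans (leq_trans h2 sK) h1; by rewrite ltnn.
set r := q ^ K %/ g.
have Hq : (q ^ K = g * r)%N by rewrite mulnC divnK // dvdn_gcdr.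
have -> : (q ^ K.+1 * t + s = g * ((r * t) * q + s2))%N.
  rewrite expnS Hq {1}Hs mulnDr; congr (_ + _); lia.
case: (Hf) => _ Hm _.
have pos : (0 < r * t * q + s2)%N by apply: ltn_addl.
rewrite (Hm g) // [in RHS]Hs (Hm g) //; congr (_ * _)%R.
rewrite (fchi q1 Hc Hf) // ?coprimeMD // (fchi q1 Hc Hf) //.
by rewrite addnC mulnC (chi_per _ _ Hc).
Qed.

Lemma delta_char_min f k n : delta_char f k <= neg_count f k n.
Proof.
rewrite /delta_char; case: ex_minnP => m _ Hm; apply: Hm.
by apply/asboolP; exists n.
Qed.

Lemma fpm q chi f n : modified_char q chi f -> 0 < n ->
  (nat_of_bool (f n == 1%R) + nat_of_bool (f n == (-1)%R) = 1)%N.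
Proof. by case=> Hv _ _ n0; case: (Hv n n0) => ->. Qed.

Lemma upper_nonprinc q chi f k u : (1 < q)%N -> real_dirichlet_char q chi -> modified_char q chi f ->
  coprime u q -> chi u = (-1)%R -> (delta_char f k).*2 <= k.
Proof.
move=> q1 Hc Hf cuq chiu.
have u0 : 0 < u.
  case: u cuq chiu => // ; rewrite /coprime gcd0n => /eqP q1'; by move: q1; rewrite q1'.
have fu : f u = (-1)%R by rewrite (fchi q1 Hc Hf).
set d := delta_char f k.
set K := u * k.
set Q := q ^ K.+1.
have cuQ : coprime u Q by rewrite /Q coprimeXr.
case: (Bezoutl Q u0) => a _; rewrite (eqP cuQ) => Ha.
have Hr : forall r, 0 < r <= u ->
    neg_count f k (((Q * (a * r) + r) %/ u).-1) = \sum_(m < k) nat_of_bool (f (r + u * m) == 1%R).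
  move=> r /andP[r0 ru].
  set x0 := (Q * (a * r) + r) %/ u.
  have Hx : Q * (a * r) + r = u * x0.
    rewrite /x0 [u * _]mulnC divnK //.
    have -> : Q * (a * r) + r = r * (1 + a * Q) by rewrite mulnDr muln1 addnC mulnCA mulnA (mulnC r) mulnC.
    exact: dvdn_mull.
  have x00 : 0 < x0.
    by rewrite -(ltn_pmul2l u0) muln0 -Hx; apply: ltn_addl.
  rewrite negcountE; apply: eq_bigr => m _.
  have -> : (x0.-1 + m.+1 = x0 + m)%N by rewrite addnS -addSn prednK.
  have : f (u * (x0 + m)) = f (r + u * m).
    rewrite mulnDr -Hx -addnA /Q (@anchor q chi f K (a*r) (r + u * m) q1 Hc Hf) //.
    rewrite addn_gt0 r0 /= /K.
    have mk : m < k := ltn_ord m.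
    apply: leq_trans (_ : u + u * m <= u * k); first by rewrite leq_add2r.
    by rewrite -mulnS leq_pmul2l.
  case: (Hf) => _ Hm _; rewrite Hm ?addn_gt0 ?x00 // fu => <-.
  by rewrite mulN1r eqr_oppLR.
have S1 : \sum_(r < u) neg_count f k (((Q * (a * r.+1) + r.+1) %/ u).-1)
          = \sum_(n < u * k) nat_of_bool (f n.+1 == 1%R).
  rewrite [u * k]mulnC.
  rewrite (eq_bigr (fun r : 'I_u => \sum_(m < k) nat_of_bool (f (r.+1 + u * m) == 1%R))); last first.
    by move=> r _; apply: Hr; rewrite ltn_ord.
  rewrite exchange_big (blocks addn u k (fun n => nat_of_bool (f n.+1 == 1%R))); apply: eq_bigr => m _; apply: eq_bigr => r _.
  by rewrite addSn addnC mulnC.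
have S2 : \sum_(i < u) neg_count f k (i * k) = \sum_(n < u * k) nat_of_bool (f n.+1 == (-1)%R).
  rewrite (blocks addn k u (fun n => nat_of_bool (f n.+1 == (-1)%R))); apply: eq_bigr => i _; rewrite negcountE; apply: eq_bigr => m _.
  by rewrite addnS.
have Stot : (\sum_(n < u * k) nat_of_bool (f n.+1 == 1%R) + \sum_(n < u * k) nat_of_bool (f n.+1 == (-1)%R) = u * k)%N.
  rewrite -big_split /= (eq_bigr (fun _ => 1%N)); first by rewrite sum1_card card_ord.
  by move=> n _; apply: (fpm Hf).
have L1 : u * d <= \sum_(r < u) neg_count f k (((Q * (a * r.+1) + r.+1) %/ u).-1).
  rewrite -{1}(card_ord u) -sum1_card big_distrl /= mul1n; apply: leq_sum => r _.
  exact: delta_char_min.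
have L2 : u * d <= \sum_(i < u) neg_count f k (i * k).
  rewrite -{1}(card_ord u) -sum1_card big_distrl /= mul1n; apply: leq_sum => r _.
  exact: delta_char_min.
have : u * d.*2 <= u * k.
  by rewrite -Stot -addnn mulnDr -S2 -S1; apply: leq_add.
by rewrite leq_pmul2l.
Qed.


From mathcomp Require Import order.
Import Order.TTheory.

Lemma gcdnM_coprime n A B : 0 < A -> 0 < B -> coprime A B ->
  gcdn n (A * B) = gcdn n A * gcdn n B.
Proof.
move=> A0 B0 cAB; apply/eqP; rewrite eqn_dvd; apply/andP; split.
  set G := gcdn n (A * B).
  set a := gcdn G A.
  have a0 : 0 < a by rewrite gcdn_gt0 A0 orbT.
  have HG : G = a * (G %/ a) by rewrite mulnC divnK // dvdn_gcdl.
  have HA : A = a * (A %/ a) by rewrite mulnC divnK // dvdn_gcdr.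
  have c : coprime (G %/ a) (A %/ a).
    rewrite /coprime -(eqn_pmul2l a0) muln_gcdr -HG -HA muln1.
    done.
  have GB : G %/ a %| B.
    have : G %| A * B by apply: dvdn_gcdr.
    rewrite {1}HG {1}HA -mulnA dvdn_pmul2l // Gauss_dvdr //.
  have Gn : G %| n by apply: dvdn_gcdl.
  rewrite HG dvdn_mul //.
    rewrite dvdn_gcd dvdn_gcdr andbT; apply: dvdn_trans Gn; exact: dvdn_gcdl.
  rewrite dvdn_gcd GB andbT; apply: dvdn_trans Gn; rewrite {2}HG; exact: dvdn_mull.
rewrite dvdn_gcd dvdn_mul ?dvdn_gcdr // andbT Gauss_dvd ?dvdn_gcdl //.
apply: (coprime_dvdl (dvdn_gcdr _ _)); apply: (coprime_dvdr (dvdn_gcdr _ _)); exact: cAB.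
Qed.

Local Open Scope ring_scope.

Lemma crt_sum A B (U V : nat -> int) : (0 < A)%N -> (0 < B)%N -> coprime A B ->
  \sum_(x < A * B) U (x %% A)%N * V (x %% B)%N = (\sum_(i < A) U i) * (\sum_(j < B) V j).
Proof.
move=> A0 B0 cAB.
have AB0 : (0 < A * B)%N by rewrite muln_gt0 A0.
rewrite mulr_suml; under [RHS]eq_bigr do rewrite mulr_sumr.
rewrite pair_bigA /=.
pose h (p : 'I_A * 'I_B) : 'I_(A * B) := Ordinal (ltn_pmod (chinese A B p.1 p.2) AB0).
pose g (x : 'I_(A * B)) : 'I_A * 'I_B := (Ordinal (ltn_pmod x A0), Ordinal (ltn_pmod x B0)).
have hA : forall p, (h p %% A = p.1)%N.
  move=> [i j] /=; rewrite modn_dvdm ?dvdn_mulr // chinese_modl // modn_small //.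
have hB : forall p, (h p %% B = p.2)%N.
  move=> [i j] /=; rewrite modn_dvdm ?dvdn_mull // chinese_modr // modn_small //.
rewrite (reindex h); last first.
  exists g => [[i j] _|x _].
    rewrite /g; congr (_, _); apply: val_inj => /=; [exact: (hA (i, j)) | exact: (hB (i, j))].
  apply: val_inj => /=; rewrite -(chinese_mod cAB) modn_small //.
by apply: eq_bigr => p _; rewrite hA hB.
Qed.

Lemma fge q chi f n : modified_char q chi f -> (0 < n)%N -> -1 <= f n.
Proof. by case=> Hv _ _ n0; case: (Hv n n0) => ->. Qed.

Lemma fle q chi f n : modified_char q chi f -> (0 < n)%N -> f n <= 1.
Proof. by case=> Hv _ _ n0; case: (Hv n n0) => ->. Qed.

Lemma ppow_pos q chi f p e : modified_char q chi f -> prime p ->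
  0 <= \sum_(n < p ^ e) f (gcdn n (p ^ e)).
Proof.
move=> Hf pp; case: e => [|e].
  by rewrite expn0 big_ord1 /= gcd0n (f1 Hf).
have p1 := prime_gt1 pp; have p0 := prime_gt0 pp.
have pe0 : (0 < p ^ e.+1)%N by rewrite expn_gt0 p0.
have cop : forall i m, (0 < m < p)%N -> gcdn (i * p + m) (p ^ e.+1) = 1%N.
  move=> i m /andP[m0 mp]; apply/eqP; rewrite -/(coprime _ _) coprimeXr //.
  rewrite coprimeMD coprime_sym prime_coprime //.
  by apply/negP => /(dvdn_leq m0); rewrite leqNgt mp.
rewrite -(big_mkord xpredT (fun n => f (gcdn n (p ^ e.+1)))) {1}expnSr big_mkord.
rewrite (@blocks int 0 +%R p (p ^ e) (fun n => f (gcdn n (p ^ e.+1)))).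
apply: sumr_ge0 => i _.
rewrite (bigD1 (Ordinal p0)) //= (bigD1 (Ordinal p1)) //=.
rewrite addrA (cop i 1%N) ?p1 // (f1 Hf).
apply: addr_ge0.
  rewrite addn0 addrC -lerBlDl sub0r; apply: (fge Hf).
  by rewrite gcdn_gt0 pe0 orbT.
apply: sumr_ge0 => m /andP[m0 m1].
rewrite cop ?(f1 Hf) // ltn_ord andbT lt0n.
by apply: contra m0 => /eqP m00; apply/eqP; apply: val_inj.
Qed.

Lemma gcd_pos q chi f Q : modified_char q chi f -> (0 < Q)%N ->
  0 <= \sum_(n < Q) f (gcdn n Q).
Proof.
move=> Hf; elim: Q {-2}Q (leqnn Q) => [|N IH] Q; first by rewrite leqn0 => /eqP ->.
move=> QN Q0.
have [Q1|Q1] := leqP Q 1%N.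
  have -> : Q = 1%N by apply/eqP; rewrite eqn_leq Q1 Q0.
  by rewrite big_ord1 /= gcd0n (f1 Hf).
set p := pdiv Q.
have pp : prime p := pdiv_prime Q1.
set A := (Q`_p)%N; set B := (Q`_p^')%N.
have HQ : (A * B)%N = Q by rewrite partnC.
have cAB : coprime A B by apply: coprime_partC.
have A0 : (0 < A)%N by apply: part_gt0.
have B0 : (0 < B)%N by apply: part_gt0.
have A1 : (1 < A)%N by rewrite p_part_gt1 pi_pdiv.
have BQ : (B < Q)%N by rewrite -HQ ltn_Pmull.
case: (Hf) => _ Hm _.
rewrite -(big_mkord xpredT (fun n => f (gcdn n Q))) {1}(esym HQ) big_mkord.
rewrite (eq_bigr (fun x : 'I_(A * B) => f (gcdn (x %% A) A) * f (gcdn (x %% B) B))); last first.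
  move=> x _; rewrite [in LHS](esym HQ) gcdnM_coprime // Hm ?gcdn_gt0 ?A0 ?B0 ?orbT //.
  by rewrite !gcdn_modl.
rewrite (crt_sum (fun i => f (gcdn i A)) (fun j => f (gcdn j B))) //.
apply: mulr_ge0.
  by rewrite /A p_part; apply: (ppow_pos _ Hf pp).
apply: IH => //; rewrite -ltnS; exact: leq_trans BQ QN.
Qed.

Local Close Scope ring_scope.

Lemma count_mult N d : 0 < d -> \sum_(n < N) nat_of_bool (d %| n.+1) = N %/ d.
Proof.
move=> d0; elim: N => [|N IH]; first by rewrite big_ord0 div0n.
by rewrite big_ord_recr /= IH divnS // addnC.
Qed.

Lemma blocks' (R : Type) (idx : R) (op : Monoid.law idx) a b (F : nat -> R) :
  \big[op/idx]_(n < a * b) F n = \big[op/idx]_(i < b) \big[op/idx]_(m < a) F (i * a + m).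
Proof.
by rewrite -(big_mkord xpredT) mulnC big_mkord blocks.
Qed.

Lemma test_int (x y : int) (c Q k : nat) : (x = (Q * k)%:R - 2 * c%:R)%R -> (- Q%:R <= x)%R -> 2 * c <= Q * k + Q.
Proof. move=> *; lia. Qed.

Lemma upper_princ q chi f k : 1 < q -> real_dirichlet_char q chi -> modified_char q chi f ->
  0 < k -> (forall m, coprime m q -> chi m = 1%R) -> (delta_char f k).*2 <= k.+1.
Proof.
move=> q1 Hc Hf k0 princ.
have q0 : 0 < q by apply: ltnW.
set a := 2 * q.+1 * k.
set Q := q ^ a.
have Q0 : 0 < Q by rewrite expn_gt0 q0.
have a0 : 0 < a by rewrite /a !muln_gt0 k0.
pose E n := [exists p : 'I_q.+1, prime p && (p %| q) && (p ^ a %| n)].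
case: (Hf) => Hv Hm Hp.
have T1 : forall n, 0 < n -> (f (gcdn n Q) - 2 * (nat_of_bool (E n))%:R <= f n)%R.
  move=> n n0; case: (boolP (E n)) => En.
    have h1 : (f (gcdn n Q) <= 1)%R by apply: (fle Hf); rewrite gcdn_gt0 n0.
    have h2 : (-1 <= f n)%R by apply: (fge Hf).
    move: h1 h2; rewrite /=; lia.
  have cop : coprime (n %/ gcdn n Q) q.
    apply: contraT => /(lemG n0 q0) [p [pp pq pa]].
    have pq1 : p < q.+1 by rewrite ltnS dvdn_leq.
    have : E n by apply/existsP; exists (Ordinal pq1); rewrite /= pp pq pa.
    by rewrite (negbTE En).
  have g0 : 0 < gcdn n Q by rewrite gcdn_gt0 n0.
  have m0 : 0 < n %/ gcdn n Q by rewrite divn_gt0 // dvdn_leq // dvdn_gcdl.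
  have -> : f n = f (gcdn n Q).
    rewrite -{1}(divnK (dvdn_gcdl n Q)) mulnC Hm // (@fchi q chi f (n %/ gcdn n Q) q1 Hc Hf m0 cop) princ //.
    by rewrite GRing.mulr1.
  by rewrite /= mulr0n mulr0 subr0.
have T2 : (0 <= \sum_(n < Q * k) f (gcdn n.+1 Q))%R.
  rewrite -(big_mkord xpredT (fun n => f (gcdn n.+1 Q))) mulnC big_mkord.
  have sh : (\sum_(n < k * Q) f (gcdn n.+1 Q) = \sum_(n < k * Q) f (gcdn n Q))%R.
    have h1 := @big_ord_recr int 0 +%R (k * Q) (fun n => f (gcdn n Q)).
    have h2 := @big_ord_recl int 0 +%R (k * Q) (fun n => f (gcdn n Q)).
    have h3 := etrans (esym h1) h2.
    rewrite /= gcd0n gcdnC gcdnMl addrC in h3.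
    by move/addrI: h3 => <-.
  rewrite sh (@blocks int 0 +%R Q k (fun n => f (gcdn n Q))).
  apply: sumr_ge0 => i _.
  rewrite (eq_bigr (fun m : 'I_Q => f (gcdn m Q))); first exact: (gcd_pos Hf).
  by move=> m _; rewrite gcdnC gcdnMDl gcdnC.
have T3 : 2 * \sum_(n < Q * k) nat_of_bool (E n.+1) <= Q.
  have S1 : \sum_(n < Q * k) nat_of_bool (E n.+1) <=
      \sum_(n < Q * k) \sum_(p < q.+1) nat_of_bool (prime p && (p %| q) && (p ^ a %| n.+1)).
    apply: leq_sum => n _; case: (boolP (E n.+1)) => // /existsP [p Hp0].
    by rewrite (bigD1 p) //= Hp0.
  set X := (Q * k) %/ 2 ^ a.
  have S2 : \sum_(n < Q * k) \sum_(p < q.+1) nat_of_bool (prime p && (p %| q) && (p ^ a %| n.+1))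
       <= q.+1 * X.
    rewrite exchange_big /=.
    apply: leq_trans (_ : \sum_(p < q.+1) X <= _); last by rewrite sum_nat_const card_ord.
    apply: leq_sum => p _.
    case: (boolP (prime p && (p %| q))) => /= Hpq; last first.
      by rewrite big1 // => n _; rewrite (negbTE Hpq).
    case/andP: Hpq => pp pq.
    rewrite (eq_bigr (fun n : 'I_(Q * k) => nat_of_bool (p ^ a %| n.+1))); last by [].
    rewrite count_mult ?expn_gt0 ?prime_gt0 //.
    by apply: leq_div2l; rewrite ?expn_gt0 // leq_exp2r // prime_gt1.
  have H1 : X * 2 ^ a <= Q * k by apply: leq_trunc_div.
  have H2 : X * a <= X * 2 ^ a by apply: leq_mul => //; apply: ltnW; apply: ltn_expl.
  have H3 : 2 * (q.+1 * X) * k <= Q * k.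
    have -> : 2 * (q.+1 * X) * k = X * a by rewrite /a; lia.
    exact: leq_trans H2 H1.
  apply: leq_trans (leq_mul (leqnn 2) (leq_trans S1 S2)) _.
  by rewrite -(leq_pmul2r k0).
set d := delta_char f k.
set c := \sum_(n < Q * k) nat_of_bool (f n.+1 == (-1)%R).
have L : Q * d <= c.
  rewrite /c (blocks addn k Q (fun n => nat_of_bool (f n.+1 == (-1)%R))).
  rewrite -{1}(card_ord Q) -sum1_card big_distrl /= mul1n; apply: leq_sum => i _.
  apply: leq_trans (delta_char_min f k (i * k)) _.
  by rewrite negcountE leq_eqVlt; apply/orP; left; apply/eqP; apply: eq_bigr => m _; rewrite addnS.
have I1 : (\sum_(n < Q * k) f n.+1 = (Q * k)%:R - 2 * c%:R)%R.
  rewrite (eq_bigr (fun n : 'I_(Q * k) => 1 - 2 * (nat_of_bool (f n.+1 == (-1)%R))%:R)%R); last first.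
    by move=> n _; case: (Hv n.+1 isT) => ->.
  by rewrite sumrB sumr_const card_ord -mulr_sumr /c natr_sum.
have I2 : (- Q%:R <= \sum_(n < Q * k) f n.+1)%R.
  apply: le_trans (_ : \sum_(n < Q * k) (f (gcdn n.+1 Q) - 2 * (nat_of_bool (E n.+1))%:R) <= _)%R; last first.
    by apply: ler_sum => n _; apply: T1.
  rewrite sumrB -mulr_sumr -natr_sum.
  have : ((2 * \sum_(n < Q * k) nat_of_bool (E n.+1))%:R <= (Q%:R : int))%R by rewrite ler_nat.
  rewrite natrM; move: T2; set s1 := (\sum_(_ < _) _)%R; set s2 := (\sum_(_ < _) _)%N => *; lia.
have Hc2 : 2 * c <= Q * k + Q by move: I1 I2; set s := (\sum_(_ < _) _)%R => *; lia.
have : Q * d.*2 <= Q * k.+1 by move: L Hc2; lia.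
by rewrite leq_pmul2l.
Qed.


Definition chi3 (n : nat) : int :=
  if n %% 3 == 0 then 0%R else if n %% 3 == 1 then 1%R else (-1)%R.
Definition f3 (n : nat) : int := chi3 (n`_(3^'))%N.

Lemma chi3M m n : chi3 (m * n) = (chi3 m * chi3 n)%R.
Proof.
rewrite /chi3 -modnMm.
have := ltn_pmod m (isT : 0 < 3); have := ltn_pmod n (isT : 0 < 3).
case: (m %% 3) => [|[|[|x]]] //; case: (n %% 3) => [|[|[|y]]] //.
Qed.

Lemma chi3_dir : real_dirichlet_char 3 chi3.
Proof.
split.
- by move=> n; rewrite /chi3; case: ifP => _; [|case: ifP => _]; rewrite !inE.
- by move=> n; rewrite /chi3 modnDr.
- exact: chi3M.
- move=> n; rewrite coprime_sym prime_coprime // negbK /dvdn /chi3.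
  by case: ifP => // _; case: ifP.
Qed.

Lemma three_part : (3`_(3^') = 1)%N.
Proof. by rewrite part_p'nat // pnatE // !inE. Qed.

Lemma chi3_pm n : coprime n 3 -> chi3 n = 1%R \/ chi3 n = (-1)%R.
Proof.
rewrite coprime_sym prime_coprime // /dvdn /chi3 => /negbTE ->.
by case: ifP => _; [left|right].
Qed.

Lemma f3_mod : modified_char 3 chi3 f3.
Proof.
split.
- move=> n n0; apply: chi3_pm.
  have := coprime_partC 3 3 n; rewrite part_pnat_id ?pnat_id //.
  by rewrite coprime_sym.
- by move=> a b a0 b0; rewrite /f3 partnM // chi3M.
- move=> p pp p3; rewrite /f3 part_pnat_id // pnatE // !inE.
  by apply: contra p3 => /eqP ->.
Qed.

Local Open Scope ring_scope.

Definition S3 n : int := \sum_(m < n) f3 m.+1.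

Lemma S3S n : S3 n.+1 = S3 n + f3 n.+1.
Proof. by rewrite /S3 big_ord_recr. Qed.

Lemma f3_3 t : (0 < t)%N -> f3 (3 * t) = f3 t.
Proof. by move=> t0; rewrite /f3 partnM // three_part mul1n. Qed.

Lemma f3_r t r : (0 < r < 3)%N -> f3 (3 * t + r) = chi3 r.
Proof.
move=> /andP[r0 r3].
have nd : ~~ (3 %| 3 * t + r)%N.
  by rewrite dvdn_addr ?dvdn_mulr //; apply/negP => /(dvdn_leq r0); rewrite leqNgt r3.
rewrite /f3 part_pnat_id ?p'natE //.
by rewrite /chi3 mulnC modnMDl.
Qed.

Lemma S3_3 t : S3 (3 * t) = S3 t.
Proof.
elim: t => [|t IH]; first by rewrite muln0.
rewrite mulnS !S3S -[(3 * t).+3](mulnS 3 t) -[(3 * t).+2]addn2 -[(3 * t).+1]addn1.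
rewrite (f3_r t (isT : (0 < 1 < 3)%N)) (f3_r t (isT : (0 < 2 < 3)%N)) f3_3 // IH.
by rewrite /chi3 /= addrK.
Qed.

Lemma S3_div n : S3 n = S3 (n %/ 3)%N + (n %% 3 == 1)%N%:R.
Proof.
rewrite {1}(divn_eq n 3) mulnC.
have := ltn_pmod n (isT : (0 < 3)%N).
case: (n %% 3)%N => [|[|[|x]]] // _.
- by rewrite addn0 S3_3 addr0.
- by rewrite addn1 S3S S3_3 -[(3 * _).+1]addn1 (f3_r _ (isT : (0 < 1 < 3)%N)).
- rewrite addn2 !S3S S3_3 -[(3 * _).+2]addn2 -[(3 * _).+1]addn1.
  by rewrite (f3_r _ (isT : (0 < 1 < 3)%N)) (f3_r _ (isT : (0 < 2 < 3)%N)) /chi3 /= addrK addr0.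
Qed.

Lemma Sbound e : forall k n, (k <= 3 ^ e)%N -> S3 (n + k) <= S3 n + (e.+1)%:R.
Proof.
elim: e => [|e IH] k n.
  rewrite expn0; case: k => [|[|k]] // _.
    by rewrite addn0 lerDl.
  by rewrite addn1 S3S lerD2l (fle f3_mod).
move=> Hk.
set n' := (n %/ 3)%N; set m := ((n + k) %/ 3)%N.
have Hm1 : (n' <= m)%N by apply: leq_div2r; apply: leq_addr.
have Hm2 : (m <= n' + 3 ^ e)%N.
  apply: leq_trans (_ : ((n + 3 ^ e.+1) %/ 3 <= _)%N).
    by apply: leq_div2r; rewrite leq_add2l.
  by rewrite expnSr addnC divnMDl // addnC.
have H : S3 m <= S3 n' + (e.+1)%:R.
  by have := IH (m - n')%N n'; rewrite subnKC //; apply; rewrite leq_subLR.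
rewrite (S3_div (n + k)) (S3_div n) -/n' -/m.
have hb1 : ((((n + k) %% 3)%N == 1%N)%:R : int) <= 1 by case: (_ == _).
have hb2 : (0 : int) <= (((n %% 3)%N == 1%N)%:R : int) by case: (_ == _).
move: H hb1 hb2.
set x := S3 m; set y := S3 n'; set b1 := ((_ == _)%:R : int); set b2 := ((_ == _)%:R : int).
rewrite -!natr1 ?natrD.
lia.
Qed.

Lemma S3_add n k : S3 (n + k) = S3 n + \sum_(m < k) f3 (n + m.+1)%N.
Proof.
elim: k => [|k IH]; first by rewrite addn0 big_ord0 addr0.
by rewrite addnS S3S IH big_ord_recr /= addrA addnS.
Qed.

Lemma window_lower k n : (k <= (neg_count f3 k n).*2 + (trunc_log 2 k).+2)%N.
Proof.
set e := (trunc_log 2 k).+1.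
have ke : (k <= 3 ^ e)%N.
  apply: leq_trans (_ : (2 ^ e <= 3 ^ e)%N); last by rewrite leq_exp2r.
  by apply: ltnW; apply: trunc_log_ltn.
have := Sbound n ke; rewrite S3_add lerD2l.
have -> : \sum_(m < k) f3 (n + m.+1)%N = k%:R - 2 * (neg_count f3 k n)%:R.
  rewrite negcountE natr_sum mulr_sumr.
  rewrite (eq_bigr (fun m : 'I_k => 1 - 2 * (nat_of_bool (f3 (n + m.+1)%N == -1))%:R)); last first.
    move=> m _; case: f3_mod => Hv _ _.
    have hp : (0 < n + m.+1)%N by rewrite addnS.
    by case: (Hv (n + m.+1)%N hp) => ->.
  by rewrite sumrB sumr_const card_ord.
move: (neg_count f3 k n) => c; rewrite /e; lia.
Qed.

Lemma lower_bound k : (k <= (delta_char f3 k).*2 + (trunc_log 2 k).+2)%N.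
Proof.
rewrite /delta_char; case: ex_minnP => m /asboolP [n <-] _.
exact: window_lower.
Qed.

Local Close Scope ring_scope.

Lemma dchar_upper q chi f k : 1 < q -> real_dirichlet_char q chi -> modified_char q chi f ->
  0 < k -> (delta_char f k).*2 <= k.+1.
Proof.
move=> q1 Hc Hf k0.
case: (pselect (exists u, coprime u q /\ chi u = (-1)%R)) => [[u [cu hu]]|np].
  by have := @upper_nonprinc q chi f k u q1 Hc Hf cu hu; lia.
apply: (upper_princ q1 Hc Hf k0) => m cm.
case: (Hc) => Hv _ _ H0.
have : chi m != 0%R by rewrite H0 cm.
move: (Hv m); rewrite !inE => /or3P [] /eqP hm; rewrite hm //.
by move=> _; exfalso; apply: np; exists m.
Qed.

Lemma delta_upper k : 0 < k -> (delta k).*2 <= k.+1.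
Proof.
move=> k0.
suff : delta k <= k.+1 %/ 2 by lia.
rewrite /delta; apply/bigmax_leqP => d /asboolP [q [chi [f [q1 Hc Hf Hd]]]].
have := dchar_upper q1 Hc Hf k0; rewrite Hd; lia.
Qed.

Lemma delta_lower k : k <= (delta k).*2 + (trunc_log 2 k).+2.
Proof.
apply: leq_trans (lower_bound k) _; rewrite leq_add2r leq_double.
have dk : delta_char f3 k < k.+1.
  rewrite ltnS; apply: leq_trans (delta_char_min f3 k 0) _.
  rewrite negcountE; apply: leq_trans (_ : \sum_(m < k) 1 <= k).
    by apply: leq_sum => m _; case: (_ == _).
  by rewrite sum1_card card_ord.
rewrite /delta; apply: (leq_bigmax_cond (Ordinal dk)).
apply/asboolP; exists 3, chi3, f3; split => //.
- exact: chi3_dir.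
- exact: f3_mod.
Qed.


From Stdlib Require Import Reals Lra.
Open Scope R_scope.

Lemma ln_le' x y : 0 < x -> x <= y -> ln x <= ln y.
Proof.
move=> x0 xy; case: (Rle_lt_or_eq_dec x y xy) => h.
  by apply: Rlt_le; apply: ln_increasing.
by rewrite h; apply: Rle_refl.
Qed.

Lemma INR_pow2 L : INR (expn 2 L) = pow 2 L.
Proof.
elim: L => [|L IH] //; rewrite expnS mult_INR IH /=; lra.
Qed.

Theorem theorem1p2 :
  exists C : R, forall k : nat, (1 <= k)%nat ->
    Rabs (INR (delta k) - INR k / 2) <= C * ln (INR k + 1).
Proof.
exists (2 / ln 2) => k k1.
have hu := delta_upper k1.
have hl := delta_lower k.
have hL := trunc_logP (isT : (1 < 2)%nat) k1.
move: hu hl hL; set D := delta k; set L := trunc_log 2 k => hu hl hL.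
have R1 : 2 * INR D <= INR k + 1.
  have : (2 * D <= k + 1)%coq_nat by apply/ssrnat.leP; lia.
  by move/le_INR; rewrite -ssrnat.multE -ssrnat.plusE ?mult_INR !plus_INR /=; lra.
have R2 : INR k <= 2 * INR D + INR L + 2.
  have : (k <= 2 * D + L + 2)%coq_nat by apply/ssrnat.leP; lia.
  by move/le_INR; rewrite -ssrnat.multE -!ssrnat.plusE !plus_INR ?mult_INR /=; lra.
have k1R : 1 <= INR k.
  have : (1 <= k)%coq_nat by apply/ssrnat.leP.
  by move/le_INR => /=.
have c0 : 0 < ln 2 by rewrite -ln_1; apply: ln_increasing; lra.
have R3 : INR L * ln 2 <= ln (INR k + 1).
  have two0 : 0 < 2 by lra.
  rewrite -(ln_pow _ two0).
  apply: ln_le'.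
    apply: pow_lt; lra.
  have : (expn 2 L <= k)%coq_nat by apply/ssrnat.leP.
  move/le_INR; rewrite INR_pow2; lra.
have R4 : ln 2 <= ln (INR k + 1) by apply: ln_le'; lra.
move: R3 R4 c0; set l := ln (INR k + 1); set c := ln 2 => R3 R4 c0.
have -> : 2 / c * l = 2 * (l / c) by field; lra.
have hr : c * (l / c) = l by field; lra.
move: hr; set r := l / c => hr.
have r1 : 1 <= r by apply: (Rmult_le_reg_l c) => //; lra.
have rL : INR L <= r by apply: (Rmult_le_reg_l c) => //; lra.
apply: Rabs_le; lra.
Qed.
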